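(* Let $G$ be an execution graph, $T$ a thread and $q$ an await-iteration index of $T$ with $\mathit{fail}_G^T(q)$, and let $n=\mathit{len}_G^T(q)$. Then $k_G^T(\mathit{end}_G^T(q)+1)=k_G^T(\mathit{start}_G^T(q))$, $\mathit{start}_G^T(q+1)=\mathit{end}_G^T(q)+1$, and $\mathit{end}_G^T(q+1)=\mathit{end}_G^T(q)+1+n$.
   Context: Programs. There are finite sets $\mathit{Register}$, $\mathit{Value}$, $\mathit{Location}$; $\mathit{State}=\mathit{Register}\to\mathit{Value}$; an update is a partial map $\mathit{Register}\rightharpoonup\mathit{Value}$, and $(\sigma\ll\mu)(r)=\mu(r)$ if $r\in\mathrm{Dom}(\mu)$, else $\sigma(r)$. Events are reads $R^m(x)$, writes $W^m(x,v)$, fences $F^m$, error $E$. A program consists of finitely many threads $T$, each with a finite statement sequence $P_T(0),\dots,P_T(|P_T|-1)$. A statement is $\mathtt{step}(\epsilon,\delta)$ with $\epsilon:\mathit{State}\to\mathit{Event}$, $\delta:\mathit{State}\times(\mathit{Value}\cup\{\bot\})\to\mathit{Update}$, or $\mathtt{await}(n,\kappa)$ with $n\in\mathbb N$, $\kappa:\mathit{State}\to\{0,1\}$. Syntactic restriction: if $P_T(k)=\mathtt{await}(n,\cdot)$ then $n\le k$ and no $P_T(k')$ with $k'\in[k-n:k)$ is an await. ($[a:b)=\{a,\dots,b-1\}$.) An execution graph $G$ has a set $G.\mathrm E$ of triples $\langle T,t,e\rangle$ and a partial reads-from map $G.\mathrm{rf}$ from reads to writes. Thread-local semantics: $k_G^T(0)=0$,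 $\sigma_G^T(0)$ fixed; if $k_G^T(t)\ge|P_T|$ or no triple $\langle T,t,\cdot\rangle$ is in $G.\mathrm E$, execution stops ($N_G^T=t$). Otherwise with $S=P_T(k_G^T(t))$: $e_G^T(t)=\epsilon(\sigma_G^T(t))$ for $S=\mathtt{step}(\epsilon,\cdot)$, $F^{\mathrm{rlx}}$ for an await; $v_G^T(t)$ is the value of the write that $G.\mathrm{rf}$ assigns to $\langle T,t,e_G^T(t)\rangle$ if this is a read with defined rf, else $\bot$. For a step: $k_G^T(t+1)=k_G^T(t)+1$; if $e_G^T(t)$ is a read with $v_G^T(t)=\bot$ then $N_G^T=t+1$, $\sigma_G^T(t+1)=\sigma_G^T(t)$, else $\sigma_G^T(t+1)=\sigma_G^T(t)\ll\delta(\sigma_G^T(t),v_G^T(t))$. For $\mathtt{await}(n,\kappa)$: $\sigma_G^T(t+1)=\sigma_G^T(t)$ and $k_G^T(t+1)=k_G^T(t)+1$ if $\kappa(\sigma_G^T(t))=0$, else $k_G^T(t)-n$. Awaits: $\mathit{end}_G^T(0)<\mathit{end}_G^T(1)<\cdots$ enumerate the steps $t$ (with $t<N_G^T$) at which $P_T(k_G^T(t))$ is an await; $\mathit{len}_G^T(q)=n$ where $P_T(k_G^T(\mathit{end}_G^T(q)))=\mathtt{await}(n,\kappa)$; $\mathit{start}_G^T(q)=\mathit{end}_G^T(q)-\mathit{len}_G^T(q)$; iteration $q$ failed, $\mathit{fail}_G^T(q)$, iff $\kappa(\sigma_G^T(\mathit{end}_G^T(q)))=1$. *)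

(* Defs.v *)
From mathcomp Require Import all_boot.

Set Implicit Arguments.
Unset Strict Implicit.
Unset Printing Implicit Defensive.

(* Access modes of events. Only [Rlx] is used by the semantics (awaits emit F^rlx). *)
Inductive mode := NA | Rlx | Acq | Rel | AcqRel | SC.

Section Defs.

Variables (Reg Val Loc Thread : finType).

Definition state := Reg -> Val.
Definition update := Reg -> option Val.

Definition upd (s : state) (mu : update) : state :=
  fun r => match mu r with Some v => v | None => s r end.

Inductive event :=
| ERead  of mode & Loc
| EWrite of mode & Loc & Val
| EFence of mode
| EError.

Definition is_read (e : event) : bool :=
  if e is ERead _ _ then true else false.
Definition is_write (e : event) : bool :=
  if e is EWrite _ _ _ then true else false.

(* step(eps, delta) with delta : State x (Value u {bot}) -> Update;
   await(n, kappa) with kappa : State -> {0,1} (true = 1). *)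
Inductive stmt :=
| Step  of (state -> event) & (state -> option Val -> update)
| Await of nat & (state -> bool).

Definition is_await (o : option stmt) : bool :=
  if o is Some (Await _ _) then true else false.

Definition program := Thread -> seq stmt.

Definition wf_program (P : program) : Prop :=
  forall T k n kappa, onth (P T) k = Some (Await n kappa) ->
    n <= k /\ (forall k', k - n <= k' < k -> ~~ is_await (onth (P T) k')).

Definition triple := (Thread * nat * event)%type.

Record graph := Graph {
  gE  : triple -> Prop;
  grf : triple -> option triple
}.

Definition rf_wf (G : graph) : Prop :=
  forall a b, grf G a = Some b ->
    [/\ gE G a, gE G b, is_read a.2 & is_write b.2].

Section Thread_semantics.
Variables (P : program) (sigma0 : Thread -> state) (G : graph) (T : Thread).

Definition stmt_at (k : nat) : option stmt := onth (P T) k.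

Definition cur_event (k : nat) (s : state) : event :=
  match stmt_at k with
  | Some (Step eps _) => eps s
  | _ => EFence Rlx
  end.

Definition read_val (t : nat) (e : event) : option Val :=
  if is_read e then
    match grf G (T, t, e) with
    | Some (_, _, EWrite _ _ v) => Some v
    | _ => None
    end
  else None.

(* (k_G^T(t), sigma_G^T(t)); computed by recursion (values after the
   thread has stopped are irrelevant). *)
Fixpoint conf (t : nat) : nat * state :=
  match t with
  | 0 => (0, sigma0 T)
  | t'.+1 =>
    let (k, s) := conf t' in
    match stmt_at k with
    | Some (Step eps delta) =>
        let e := eps s in
        let v := read_val t' e in
        if is_read e && (v == None) then (k.+1, s) else (k.+1, upd s (delta s v))
    | Some (Await n kappa) => if kappa s then (k - n, s) else (k.+1, s)
    | None => (k, s)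
    end
  end.

Definition kG (t : nat) : nat := (conf t).1.
Definition sigmaG (t : nat) : state := (conf t).2.
Definition eG (t : nat) : event := cur_event (kG t) (sigmaG t).
Definition vG (t : nat) : option Val := read_val t (eG t).

(* step t is a read that got no value: execution stops after it *)
Definition stuck (t : nat) : bool := is_read (eG t) && (vG t == None).

(* t < N_G^T *)
Definition active (t : nat) : Prop :=
  forall t', t' <= t ->
    [/\ kG t' < size (P T),
        (exists e, gE G (T, t', e)) &
        (forall t'', t' = t''.+1 -> ~~ stuck t'')].

Definition await_step (t : nat) : Prop := active t /\ is_await (stmt_at (kG t)).

(* is_end q t  <->  end_G^T(q) = t  (q-th await step, 0-based) *)
Inductive is_end : nat -> nat -> Prop :=
| is_end0 t : await_step t -> (forall t', t' < t -> ~ await_step t') -> is_end 0 t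
| is_endS q t0 t : is_end q t0 -> t0 < t -> await_step t ->
    (forall t', t0 < t' < t -> ~ await_step t') -> is_end q.+1 t.

Definition len_at (t : nat) : nat :=
  if stmt_at (kG t) is Some (Await n _) then n else 0.
Definition fail_at (t : nat) : bool :=
  if stmt_at (kG t) is Some (Await _ kappa) then kappa (sigmaG t) else false.

End Thread_semantics.
End Defs.

(* Main.v *)
Require Import Defs.
From mathcomp Require Import all_boot.
From mathcomp Require Import zify.

Lemma onth_none_size {A : Type} (s : seq A) i : onth s i = None -> size s <= i.
Proof. elim: s i => [|x s IH] [|i] //= H; exact: IH. Qed.

Lemma onth_some_size {A : Type} (s : seq A) i x : onth s i = Some x -> i < size s.
Proof. elim: s i => [|x' s IH] [|i] //= H; exact: IH H. Qed.

Lemma kG_succ (Reg Val Loc Thread : finType)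
  (P : program Reg Val Loc Thread) (sigma0 : Thread -> state Reg Val)
  (G : graph Val Loc Thread) (T : Thread) t :
  kG P sigma0 G T t.+1 =
  match stmt_at P T (kG P sigma0 G T t) with
  | Some (Step _ _) => (kG P sigma0 G T t).+1
  | Some (Await m kap) => if kap (sigmaG P sigma0 G T t) then kG P sigma0 G T t - m
                          else (kG P sigma0 G T t).+1
  | None => kG P sigma0 G T t
  end.
Proof.
rewrite /kG /sigmaG /=; case: conf => k s /=.
case: stmt_at => [[e d|m kap]|] //=; by [case: ifP | case: (kap s)].
Qed.

Lemma kG_le (Reg Val Loc Thread : finType)
  (P : program Reg Val Loc Thread) (sigma0 : Thread -> state Reg Val)
  (G : graph Val Loc Thread) (T : Thread) t :
  kG P sigma0 G T t <= t.
Proof.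
elim: t => [|t IH]; first by [].
rewrite kG_succ; case: stmt_at => [[e d|m kap]|] //; try lia.
case: ifP => _; lia.
Qed.

Lemma is_end_uniq (Reg Val Loc Thread : finType)
  (P : program Reg Val Loc Thread) (sigma0 : Thread -> state Reg Val)
  (G : graph Val Loc Thread) (T : Thread) q t1 t2 :
  is_end P sigma0 G T q t1 -> is_end P sigma0 G T q t2 -> t1 = t2.
Proof.
move=> H; elim: H t2 => [t A M | q' t0 t H IH lt A M] t2 H2.
- inversion H2 as [t2' A2 M2 E1 E2|]; subst.
  case: (ltngtP t t2) => // c.
  + by case: (M2 t).
  + by case: (M t2).
- inversion H2 as [|q2 t3 t2' H1 lt2 A2 M2 E1 E2]; subst.
  have e := IH _ H1; subst t3.
  case: (ltngtP t t2) => // c.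
  + by exfalso; apply: (M2 t) => //; rewrite lt c.
  + by exfalso; apply: (M t2) => //; rewrite lt2 c.
Qed.

Theorem lemma4 (Reg Val Loc Thread : finType)
  (P : program Reg Val Loc Thread) (sigma0 : Thread -> state Reg Val)
  (G : graph Val Loc Thread) (T : Thread) (q te : nat) :
  wf_program P -> rf_wf G ->
  is_end P sigma0 G T q te ->
  fail_at P sigma0 G T te ->
  let n := len_at P sigma0 G T te in
  kG P sigma0 G T te.+1 = kG P sigma0 G T (te - n) /\
  (forall te', is_end P sigma0 G T q.+1 te' ->
     te' - len_at P sigma0 G T te' = te.+1 /\ te' = te.+1 + n).
Proof.
move=> wf _ Hend Hfail n.
have Haw : await_step P sigma0 G T te by case: Hend.
set k := kG P sigma0 G T te.
have [kap [Hk Hkap]] : exists kap, stmt_at P T k = Some (@Await Reg Val Loc n kap) /\ kap (sigmaG P sigma0 G T te).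
  move: Haw Hfail; rewrite /n /len_at /fail_at -/k => -[_].
  case: stmt_at => [[e d|m kap]|] //= _ H; by exists kap.
have [nk Hna] := wf _ _ _ _ Hk.
have ksz : k < size (P T) := onth_some_size _ _ _ Hk.
have kte : k <= te by apply: kG_le.
have Hsome : forall i, i < k -> exists st, stmt_at P T i = Some st.
  move=> i ik; rewrite /stmt_at; case E: onth => [st|]; first by exists st.
  move/onth_none_size: E; lia.
have Hnotaw : forall i, k - n <= i < k -> ~~ is_await (stmt_at P T i) by [].
have H1 : kG P sigma0 G T te.+1 = k - n.
  by rewrite kG_succ -/k Hk Hkap.
split.
  rewrite H1.
  suff : forall j, j <= n -> kG P sigma0 G T (te - j) = k - j by move/(_ n (leqnn n))->.
  elim => [|j IH] jn; first by rewrite !subn0.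
  have IH' := IH (ltnW jn).
  rewrite (_ : te - j = (te - j.+1).+1) in IH'; last lia.
  rewrite kG_succ in IH'.
  set k' := kG P sigma0 G T (te - j.+1) in IH' *.
  move: IH'; case E: stmt_at => [[e d|m kap']|].
  - lia.
  - case: ifP => _; last lia.
    move=> e1.
    have [mk Hm] := wf _ _ _ _ E.
    case: (ltngtP k' k) => c.
    + have := Hnotaw k'; rewrite /stmt_at in E *; rewrite E /=; move/(_ _)/negP => h.
      exfalso; apply: h => //; lia.
    + have := Hm k; rewrite /stmt_at in Hk; rewrite Hk /=; move/(_ _)/negP => h.
      exfalso; apply: h => //; lia.
    + rewrite c Hk in E; case: E => em _; lia.
  - move=> e1; exfalso.
    case: (posnP j) => [j0|jpos].
      by move: E; rewrite e1 j0 subn0 Hk.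
    have [st Est] := Hsome k' ltac:(lia).
    by rewrite E in Est.
have Hfw : forall j, j <= n -> kG P sigma0 G T (te.+1 + j) = k - n + j.
  elim => [|j IH] jn; first by rewrite !addn0 H1.
  rewrite addnS kG_succ IH; last by lia.
  have [st Est] := Hsome (k - n + j) ltac:(lia).
  have := Hnotaw (k - n + j) ltac:(lia).
  rewrite Est; case: st Est => [e d|m kap'] Est //= _; lia.
have Hnot : forall j, j < n -> ~ await_step P sigma0 G T (te.+1 + j).
  move=> j jn [_]; rewrite Hfw; last lia.
  by move/negP: (Hnotaw (k - n + j) ltac:(lia)).
move=> te' Hend'; inversion Hend' as [|q2 t0 t2' H0 lt2 H2 H3 E1 E2]; subst.
have e0 := @is_end_uniq _ _ _ _ _ _ _ _ _ _ _ H0 Hend; subst t0.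
have Hte' : te' = te.+1 + n.
  case: (ltngtP te' (te.+1 + n)) => c //.
  - exfalso; apply: (Hnot (te' - te.+1)); first lia.
    by have -> : te.+1 + (te' - te.+1) = te' by lia.
  - exfalso; apply: (H3 (te.+1 + n)); first lia.
    split.
      move: H2 => [Ha _] t' tt'; apply: Ha; lia.
    by rewrite Hfw // (subnK nk) Hk.
subst te'; split => //.
rewrite /len_at Hfw // (subnK nk) Hk.
by rewrite addnK.
Qed.
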